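(* Let $L$ be a multisorted algebra in the positive existential signature satisfying axioms (1), (2), (3), (4), (8). Let $r\neq s$ be two elements of the same sort of $L$. Then there is a set $W$ and an almost morphism $\varphi\colon L\to A(W)$ into the positive existential algebra of $W$ such that $\varphi(r)\neq\varphi(s)$.
   Context: The Boolean prime ideal theorem is assumed. Signature. There is a sort $n$ for each $n\ge0$. For every function $\alpha\colon\{1,\dots,n\}\to\{1,\dots,k\}$ there is a unary function symbol (''substitution'') $\alpha\colon n\to k$ (argument of sort $n$, value of sort $k$). Each sort has $0,1,\vee,\wedge$; for each $n$ there is $\exists\colon n+1\to n$ (positive existential signature). For $\alpha\colon k\to n$, $\beta\colon n\to m$, $\beta\circ\alpha$ is the substitution symbol of the composite function; $\mathrm{id}$ is the identity substitution. The associated cylindrification of $\exists\colon n+1\to n$ is $c\colon n\to n+1$, $c(i)=i$. For a set $W$: $\alpha^{\mathrm{tuple}}(x_1,\dots,x_k)=(x_{\alpha(1)},\dots,x_{\alpha(n)})$, $\alpha^{\mathrm{relation}}(r)=\{\bar x\in W^k:\alpha^{\mathrm{tuple}}(\bar x)\in r\}$. The positive existential algebra $A(W)$ interprets sort $n$ as $\mathcal P(W^n)$, $\alpha$ as $\alpha^{\mathrm{relation}}$, $0,1,\vee,\wedge$ as $\emptyset,W^n,\cup,\cap$, and $\exists(r)=\{\bar x:\exists y\,(\bar x,y)\in r\}$. An almost morphism $\varphi\colon L\to A(W)$ is a sort-preserving family of maps commuting with all substitutions and with $0,1,\vee,\wedge$, and satisfying $\exists(\varphi(r))\subseteq\varphi(\exists(r))$.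 Axioms: (1) each sort is a bounded distributive lattice; (2) substitutions preserve $0,1,\vee,\wedge$; (3) $(\beta\circ\alpha)(r)=\beta(\alpha(r))$; (4) $\mathrm{id}(r)=r$; (8) $r\le c(\exists(r))$ (where $x\le y$ means $x=x\wedge y$). *)

(* Defs.v *)
From mathcomp Require Import all_boot.
Set Implicit Arguments. Unset Strict Implicit. Unset Printing Implicit Defensive.

(* Sorts are indexed by n : nat; {1,...,n} is rendered as 'I_n (0-based).
   A substitution symbol alpha : n -> k is an element of {ffun 'I_n -> 'I_k}
   (finite functions, so extensionally equal functions are the same symbol). *)

Record PEAlg := {
  car : nat -> Type;
  pe0 : forall n, car n;
  pe1 : forall n, car n;
  pejoin : forall n, car n -> car n -> car n;
  pemeet : forall n, car n -> car n -> car n;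
  subst : forall n k, {ffun 'I_n -> 'I_k} -> car n -> car k;
  pex : forall n, car n.+1 -> car n
}.

Section PEAx.
Variable L : PEAlg.
Local Notation "x \v y" := (pejoin x y) (at level 50).
Local Notation "x \w y" := (pemeet x y) (at level 40).

Definition pe_le n (x y : car L n) : Prop := x = x \w y.

Definition compf k n m (beta : {ffun 'I_n -> 'I_m}) (alpha : {ffun 'I_k -> 'I_n})
  : {ffun 'I_k -> 'I_m} := [ffun i => beta (alpha i)].
Definition idf n : {ffun 'I_n -> 'I_n} := [ffun i => i].
Definition cyl n : {ffun 'I_n -> 'I_n.+1} := [ffun i => widen_ord (leqnSn n) i].

Definition ax1 : Prop := forall n (x y z : car L n),
  x \v (y \v z) = (x \v y) \v z /\ x \w (y \w z) = (x \w y) \w z /\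
  x \v y = y \v x /\ x \w y = y \w x /\
  x \v (x \w y) = x /\ x \w (x \v y) = x /\
  x \w (y \v z) = (x \w y) \v (x \w z) /\
  x \v pe0 L n = x /\ x \w pe1 L n = x.
Definition ax2 : Prop := forall n k (a : {ffun 'I_n -> 'I_k}) (x y : car L n),
  [/\ subst a (pe0 L n) = pe0 L k, subst a (pe1 L n) = pe1 L k,
      subst a (x \v y) = subst a x \v subst a y &
      subst a (x \w y) = subst a x \w subst a y].
Definition ax3 : Prop := forall k n m (alpha : {ffun 'I_k -> 'I_n})
  (beta : {ffun 'I_n -> 'I_m}) (r : car L k),
  subst (compf beta alpha) r = subst beta (subst alpha r).
Definition ax4 : Prop := forall n (r : car L n), subst (idf n) r = r.
Definition ax8 : Prop := forall n (r : car L n.+1),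
  pe_le r (subst (cyl n) (pex r)).

Definition pe_axioms : Prop := [/\ ax1, ax2, ax3, ax4 & ax8].
End PEAx.

(* The positive existential algebra A(W): sort n is P(W^n), with
   W^n = 'I_n -> W and subsets represented as predicates. *)
Definition perel (W : Type) n := ('I_n -> W) -> Prop.

Definition subst_tuple W n k (a : {ffun 'I_n -> 'I_k}) (x : 'I_k -> W) : 'I_n -> W :=
  fun i => x (a i).
Definition subst_rel W n k (a : {ffun 'I_n -> 'I_k}) (r : perel W n) : perel W k :=
  fun x => r (subst_tuple a x).
(* the tuple (x_1,...,x_n,y) in W^(n+1) *)
Definition snoc_tuple W n (x : 'I_n -> W) (y : W) : 'I_n.+1 -> W :=
  fun i => match unlift ord_max i with Some j => x j | None => y end.
Definition ex_rel W n (r : perel W n.+1) : perel W n :=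
  fun x => exists y, r (snoc_tuple x y).

(* Almost morphism phi : L -> A(W); equalities of sets are stated pointwise. *)
Definition almost_morphism (L : PEAlg) (W : Type) (phi : forall n, car L n -> perel W n)
  : Prop :=
  (forall n k (a : {ffun 'I_n -> 'I_k}) (r : car L n) x,
          phi k (subst a r) x <-> subst_rel a (phi n r) x) /\
      (forall n x, ~ phi n (pe0 L n) x) /\
      (forall n x, phi n (pe1 L n) x) /\
      (forall n (r s : car L n) x, phi n (pejoin r s) x <-> (phi n r x \/ phi n s x)) /\
      (forall n (r s : car L n) x, phi n (pemeet r s) x <-> (phi n r x /\ phi n s x)) /\
      (forall n (r : car L n.+1) x, ex_rel (phi n.+1 r) x -> phi n (pex r) x).

(* Main.v *)
Require Import Defs.
From mathcomp Require Import all_boot.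
From mathcomp Require Import classical_sets boolp.
From Stdlib Require Classical_Prop.
Set Implicit Arguments. Unset Strict Implicit.


Section Lat.
Variable L : PEAlg.
Variable n : nat.
Hypothesis H1 : ax1 L.
Local Notation T := (car L n).
Local Notation "x \v y" := (pejoin x y) (at level 50).
Local Notation "x \w y" := (pemeet x y) (at level 40).
Local Notation "x <=: y" := (pe_le x y) (at level 70).

Let jA (x y z : T) : x \v (y \v z) = (x \v y) \v z. Proof. by have [? _] := H1 x y z. Qed.
Let mA (x y z : T) : x \w (y \w z) = (x \w y) \w z. Proof. by have [_ [? _]] := H1 x y z. Qed.
Let jC (x y : T) : x \v y = y \v x. Proof. by have [_ [_ [? _]]] := H1 x y x. Qed.
Let mC (x y : T) : x \w y = y \w x. Proof. by have [_ [_ [_ [? _]]]] := H1 x y x. Qed.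
Let jK (x y : T) : x \v (x \w y) = x. Proof. by have [_ [_ [_ [_ [? _]]]]] := H1 x y x. Qed.
Let mK (x y : T) : x \w (x \v y) = x. Proof. by have [_ [_ [_ [_ [_ [? _]]]]]] := H1 x y x. Qed.
Let mD (x y z : T) : x \w (y \v z) = (x \w y) \v (x \w z). Proof. by have [_ [_ [_ [_ [_ [_ [? _]]]]]]] := H1 x y z. Qed.
Let j0 (x : T) : x \v pe0 L n = x. Proof. by have [_ [_ [_ [_ [_ [_ [_ [? _]]]]]]]] := H1 x x x. Qed.
Let m1 (x : T) : x \w pe1 L n = x. Proof. by have [_ [_ [_ [_ [_ [_ [_ [_ ?]]]]]]]] := H1 x x x. Qed.

Let mm (x : T) : x \w x = x. Proof. by rewrite -{2}(jK x x) mK. Qed.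

Lemma le_refl (x : T) : x <=: x. Proof. by rewrite /pe_le mm. Qed.
Lemma le_trans (x y z : T) : x <=: y -> y <=: z -> x <=: z.
Proof. rewrite /pe_le => Hx Hy. transitivity (x \w (y \w z)); first by rewrite -Hy. by rewrite mA -Hx. Qed.
Lemma le_anti (x y : T) : x <=: y -> y <=: x -> x = y.
Proof. rewrite /pe_le => Hx Hy. transitivity (x \w y); first exact: Hx. by rewrite mC -Hy. Qed.
Lemma le_jE (x y : T) : x <=: y <-> x \v y = y.
Proof. rewrite /pe_le; split => H.
  by rewrite H jC mC jK. by rewrite -H mK. Qed.
Lemma le_jl (x y : T) : x <=: x \v y. Proof. by rewrite /pe_le mK. Qed.
Lemma le_jr (x y : T) : y <=: x \v y. Proof. by rewrite jC; apply: le_jl. Qed.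
Lemma le_lub (x y z : T) : x <=: z -> y <=: z -> x \v y <=: z.
Proof. rewrite !le_jE => Hx Hy. by rewrite -jA Hy Hx. Qed.
Lemma le_ml (x y : T) : x \w y <=: x. Proof. by rewrite le_jE jC jK. Qed.
Lemma le_mr (x y : T) : x \w y <=: y. Proof. by rewrite mC; apply: le_ml. Qed.
Lemma le_glb (x y z : T) : z <=: x -> z <=: y -> z <=: x \w y.
Proof. rewrite /pe_le => Hx Hy. by rewrite mA -Hx -Hy. Qed.
Lemma le0 (x : T) : pe0 L n <=: x. Proof. by rewrite le_jE jC j0. Qed.
Lemma le1 (x : T) : x <=: pe1 L n. Proof. by rewrite /pe_le m1. Qed.
Lemma le_distr (p x y : T) : (p \v x) \w (p \v y) <=: p \v (x \w y).
Proof.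
rewrite mD; apply: le_lub.
  apply: le_trans (le_jl _ _); apply: le_mr.
rewrite mC mD; apply: le_lub.
  apply: le_trans (le_jl _ _); apply: le_mr.
apply: le_trans (le_jr _ _); rewrite mC; apply: le_refl.
Qed.
End Lat.
Local Open Scope classical_set_scope.

Section BPI.
Variable L : PEAlg.
Variable n : nat.
Hypothesis H1 : ax1 L.
Local Notation T := (car L n).
Local Notation "x \v y" := (pejoin x y) (at level 50).
Local Notation "x \w y" := (pemeet x y) (at level 40).
Local Notation "x <=: y" := (pe_le x y) (at level 70).

Lemma prime_filter (a b : T) : ~ a <=: b -> exists F : T -> Prop,
 (F a /\ ~ F b) /\ [/\ ~ F (pe0 L n), F (pe1 L n),
    (forall x y, F (x \v y) <-> F x \/ F y),
    (forall x y, F (x \w y) <-> F x /\ F y) &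
    (forall x y, x <=: y -> F x -> F y)].
Proof.
move=> nab.
pose P (I : set T) := [/\ (forall x y, I x -> I y -> I (x \v y)),
   (forall x y, I x -> y <=: x -> I y), ~ I a & (forall x, I x -> I b)].
have [A [[Aj Ad Aa Ab] Amax]] : exists A, P A /\ forall B, A `<` B -> ~ P B.
  apply: Zorn_bigcup => Fm FP Ftot; split.
  - move=> x y [X FX Xx] [Y FY Yy].
    have [XY|YX] := Ftot _ _ FX FY.
      exists Y => //; have [Yj _ _ _] := FP _ FY; apply: Yj => //; exact: XY.
    exists X => //; have [Xj _ _ _] := FP _ FX; apply: Xj => //; exact: YX.
  - move=> x y [X FX Xx] yx; exists X => //.
    have [_ Xd _ _] := FP _ FX; exact: Xd Xx yx.
  - move=> [X FX Xa]; have [_ _ Xna _] := FP _ FX; exact: Xna.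
  - move=> x [X FX Xx]; exists X => //; have [_ _ _ Xb] := FP _ FX; exact: Xb Xx.
have PB : P [set y | y <=: b].
  split => /=.
  - by move=> x y; apply: (le_lub H1).
  - move=> x y xb yx; exact: (le_trans H1) yx xb.
  - exact: nab.
  - move=> _ _; exact: le_refl.
have Abb : A b.
  apply: Classical_Prop.NNPP => nAb.
  apply: (Amax _ _ PB); split.
    by move=> x /Ab.
  move=> E; apply: nAb; apply: E; exact: le_refl.
have Ale x y : A x -> y <=: x -> A y by move=> Ax; apply: Ad.
have key x : ~ A x -> exists i, A i /\ a <=: i \v x.
  move=> nAx; apply: Classical_Prop.NNPP => nex.
  pose B := [set z | exists i, A i /\ z <=: i \v x].
  apply: (Amax B).
    split.
      move=> z Az; exists z; split => //; exact: le_jl.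
    move=> E; apply: nAx; apply: E; exists b; split => //; exact: le_jr.
  split.
  - move=> z w [i [Ai zi]] [j [Aj' wj]]; exists (i \v j); split; first exact: Aj.
    apply: (le_lub H1) => //.
      apply: (le_trans H1) zi _; apply: (le_lub H1).
        apply: (le_trans H1 _ (le_jl H1 _ _)); exact: le_jl.
      exact: le_jr.
    apply: (le_trans H1) wj _; apply: (le_lub H1).
      apply: (le_trans H1 _ (le_jl H1 _ _)); exact: le_jr.
    exact: le_jr.
  - move=> z w [i [Ai zi]] wz; exists i; split => //; exact: (le_trans H1) wz zi.
  - move=> [i [Ai ai]]; apply: nex; exists i; split => //.
  - move=> _ _; exists b; split => //; exact: le_jl.
have prime x y : A (x \w y) -> A x \/ A y.
  move=> Axy; apply: Classical_Prop.NNPP => nor.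
  have [i [Ai ai]] := key x (fun h => nor (or_introl h)).
  have [j [Aj' aj]] := key y (fun h => nor (or_intror h)).
  apply: Aa; apply: Ad (le_trans H1 _ (le_distr H1 (i \v j) x y)).
    exact: Aj (Aj _ _ Ai Aj') Axy.
  apply: (le_glb H1).
    apply: (le_trans H1) ai _; apply: (le_lub H1); last exact: le_jr.
    apply: (le_trans H1 _ (le_jl H1 _ _)); exact: le_jl.
  apply: (le_trans H1) aj _; apply: (le_lub H1); last exact: le_jr.
  apply: (le_trans H1 _ (le_jl H1 _ _)); exact: le_jr.
exists (fun x => ~ A x); split; first split.
- exact: Aa.
- by move=> h; apply: h.
split.
- by move=> h; apply: h; apply: Ad Abb (le0 H1 b).
- by move=> h; apply: Aa; apply: Ad h (le1 H1 a).
- move=> x y; split.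
    move=> h; apply: Classical_Prop.NNPP => nor; apply: h; apply: Aj; apply: Classical_Prop.NNPP => h; apply: nor; by [left|right].
  case=> h Axy; apply: h; apply: Ad Axy _; [exact: le_jl|exact: le_jr].
- move=> x y; split.
    move=> h; split => Ah; apply: h; apply: Ad Ah _; [exact: le_ml|exact: le_mr].
  by case=> hx hy /prime [].
- move=> x y xy nAx Ay; apply: nAx; exact: Ad Ay xy.
Qed.
End BPI.
Local Close Scope classical_set_scope.

Lemma subst_mono (L : PEAlg) (HL : pe_axioms L) n k (a : {ffun 'I_n -> 'I_k}) (x y : car L n) :
  pe_le x y -> pe_le (subst a x) (subst a y).
Proof.
case: HL => _ H2 _ _ _; rewrite /pe_le => E.
have [_ _ _ <-] := H2 _ _ a x y; by rewrite -E.
Qed.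

Theorem lemma4p9 (L : PEAlg) (HL : pe_axioms L) (n : nat) (r s : car L n) :
  r <> s ->
  exists (W : Type) (phi : forall m, car L m -> perel W m),
    almost_morphism phi /\ exists x : 'I_n -> W, ~ (phi n r x <-> phi n s x).
Proof.
move=> rs.
have HL' := HL; case: HL' => H1 H2 H3 H4 H8.
have [a [b [nab hab]]] : exists a b : car L n, ~ pe_le a b /\ ((a = r /\ b = s) \/ (a = s /\ b = r)).
  case: (Classical_Prop.classic (pe_le r s)) => rs'.
    exists s, r; split; last by right.
    by move=> sr; apply: rs; apply: (le_anti H1).
  by exists r, s; split; last left.
have [F [[Fa Fb] [F0 F1 Fj Fm Fu]]] := prime_filter H1 nab.
exists 'I_n, (fun m t x => F (subst [ffun i => x i] t)); split; last first.
  exists (fun i => i) => E.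
  have e : forall t : car L n, subst [ffun i => i] t = t by move=> t; exact: H4.
  case: hab => -[? ?]; subst a b; rewrite !e in E; tauto.
split.
  move=> m k al t x; rewrite /subst_rel /subst_tuple -H3.
  have -> : compf [ffun i => x i] al = [ffun i => x (al i)].
    by apply/ffunP => i; rewrite !ffunE.
  by [].
split; first by move=> m x; have [-> _ _ _] := H2 _ _ [ffun i => x i] (pe0 L m) (pe0 L m).
split; first by move=> m x; have [_ -> _ _] := H2 _ _ [ffun i => x i] (pe0 L m) (pe0 L m).
split; first by move=> m t u x; have [_ _ -> _] := H2 _ _ [ffun i => x i] t u.
split; first by move=> m t u x; have [_ _ _ ->] := H2 _ _ [ffun i => x i] t u.
move=> m t x [y Fy].
apply: Fu Fy.
apply: (le_trans H1 (subst_mono HL _ (H8 m t))).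
rewrite -H3.
have -> : compf [ffun i => snoc_tuple x y i] (cyl m) = [ffun i => x i].
  apply/ffunP => i; rewrite !ffunE /snoc_tuple.
  have -> : widen_ord (leqnSn m) i = lift ord_max i by apply: val_inj; rewrite /= /bump leqNgt ltn_ord.
  by rewrite liftK.
exact: le_refl.
Qed.
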